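(* Let $(\mathbf r(t),\mathbf v(t))\in\Omega$, $t\ge0$, be a stationary solution of the three-dimensional equations of motion, and let $\mathbf L$ be its (constant) angular momentum. If there is at least one time $t_0\ge0$ at which the minimum possible root-mean-square size of the system is achieved, i.e. $g(\mathbf r(t_0))=W(\mathbf L,T(\mathbf v(t_0)))$, then this trajectory is flat (all particles move in one fixed plane).
   Context: Fix $N\ge2$, masses $m_i>0$, $\gamma>0$. $\mathfrak R_3=\{\mathbf r=(\mathbf r_1,\dots,\mathbf r_N)\in(\mathbb R^3)^N:\mathbf r_i\ne\mathbf r_j,\ i\ne j\}$, phase space $\Omega=\mathfrak R_3\times(\mathbb R^3)^N$. Equations of motion: $\dot{\mathbf r}_i=\mathbf v_i$, $m_i\dot{\mathbf v}_i=\sum_{j\ne i}\gamma m_im_j(\mathbf r_j-\mathbf r_i)/|\mathbf r_j-\mathbf r_i|^3$. A solution is stationary if there are $0<C_1\le C_2<\infty$ with $C_1\le|\mathbf r_j(t)-\mathbf r_i(t)|\le C_2$ for all $i\ne j$, $t\ge0$. $\mathbf L(\mathbf r,\mathbf v)=\sum_im_i\mathbf r_i\times\mathbf v_i$, $T(\mathbf v)=\frac12\sum_im_i|\mathbf v_i|^2$, $g(\mathbf r)=\sum_im_i|\mathbf r_i|^2$ (so the root-mean-square size is $b=\sqrt{g/\sum_jm_j}$). For $\mathbf L\in\mathbb R^3$, $T\ge0$: $W(\mathbf L,T)=\inf\{g(\mathbf r):(\mathbf r,\mathbf v)\in\Omega,\ \mathbf L(\mathbf r,\mathbf v)=\mathbf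 L,\ T(\mathbf v)=T\}$. Since the total energy $T-f$ (with $f(\mathbf r)=\sum_{i<j}\gamma m_im_j/|\mathbf r_j-\mathbf r_i|$) is conserved, $T(\mathbf v(t))$ is determined by the current cohesion $f(\mathbf r(t))$. *)

(* Defs.v *)
From Stdlib Require Import Reals Lra List.
From Coquelicot Require Import Coquelicot.
Open Scope R_scope.

Record V3 := mkV3 { vx : R; vy : R; vz : R }.

Definition vadd (a b : V3) := mkV3 (vx a + vx b) (vy a + vy b) (vz a + vz b).
Definition vsub (a b : V3) := mkV3 (vx a - vx b) (vy a - vy b) (vz a - vz b).
Definition vscal (c : R) (a : V3) := mkV3 (c * vx a) (c * vy a) (c * vz a).
Definition vzero := mkV3 0 0 0.
Definition vdot (a b : V3) := vx a * vx b + vy a * vy b + vz a * vz b.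
Definition vcross (a b : V3) :=
  mkV3 (vy a * vz b - vz a * vy b)
       (vz a * vx b - vx a * vz b)
       (vx a * vy b - vy a * vx b).
Definition vnorm (a : V3) := sqrt (vdot a a).

Definition sumR (n : nat) (f : nat -> R) : R :=
  fold_right Rplus 0 (map f (seq 0 n)).
Definition sumV (n : nat) (f : nat -> V3) : V3 :=
  fold_right vadd vzero (map f (seq 0 n)).

(* A configuration of N particles is a map nat -> V3; only indices < N matter. *)
Definition config := nat -> V3.

(* R_3 : pairwise distinct positions; Omega = R_3 x (R^3)^N *)
Definition in_R3 (N : nat) (r : config) : Prop :=
  forall i j, (i < N)%nat -> (j < N)%nat -> i <> j -> r i <> r j.
Definition in_Omega (N : nat) (r v : config) : Prop := in_R3 N r.

Definition angmom (N : nat) (m : nat -> R) (r v : config) : V3 :=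
  sumV N (fun i => vscal (m i) (vcross (r i) (v i))).
Definition kinetic (N : nat) (m : nat -> R) (v : config) : R :=
  / 2 * sumR N (fun i => m i * vdot (v i) (v i)).
Definition gmom (N : nat) (m : nat -> R) (r : config) : R :=
  sumR N (fun i => m i * vdot (r i) (r i)).

Definition Wfun (N : nat) (m : nat -> R) (L : V3) (T : R) : Rbar :=
  Glb_Rbar (fun x => exists r v : config,
              in_Omega N r v /\ angmom N m r v = L /\ kinetic N m v = T /\
              x = gmom N m r).

Definition force (N : nat) (gamma : R) (m : nat -> R) (r : config) (i : nat) : V3 :=
  sumV N (fun j => if Nat.eqb j i then vzero else
     vscal (gamma * m i * m j / (vnorm (vsub (r j) (r i))) ^ 3)
           (vsub (r j) (r i))).

Definition is_derive_V3 (f : R -> V3) (t : R) (d : V3) : Prop :=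
  is_derive (fun s => vx (f s)) t (vx d) /\
  is_derive (fun s => vy (f s)) t (vy d) /\
  is_derive (fun s => vz (f s)) t (vz d).

Definition right_cont_V3 (f : R -> V3) (t : R) : Prop :=
  filterlim (fun s => vx (f s)) (at_right t) (locally (vx (f t))) /\
  filterlim (fun s => vy (f s)) (at_right t) (locally (vy (f t))) /\
  filterlim (fun s => vz (f s)) (at_right t) (locally (vz (f t))).

Definition is_solution (N : nat) (gamma : R) (m : nat -> R)
    (r v : R -> config) : Prop :=
  (forall t, 0 <= t -> in_Omega N (r t) (v t)) /\
  (forall i, (i < N)%nat -> forall t, 0 < t ->
     is_derive_V3 (fun s => r s i) t (v t i) /\
     is_derive_V3 (fun s => vscal (m i) (v s i)) t (force N gamma m (r t) i)) /\
  (forall i, (i < N)%nat ->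
     right_cont_V3 (fun s => r s i) 0 /\ right_cont_V3 (fun s => v s i) 0).

Definition stationary (N : nat) (r : R -> config) : Prop :=
  exists C1 C2, 0 < C1 /\ C1 <= C2 /\
    forall t, 0 <= t -> forall i j, (i < N)%nat -> (j < N)%nat -> i <> j ->
      C1 <= vnorm (vsub (r t j) (r t i)) <= C2.

Definition flat (N : nat) (r : R -> config) : Prop :=
  exists (n : V3) (c : R), n <> vzero /\
    forall t, 0 <= t -> forall i, (i < N)%nat -> vdot n (r t i) = c.

(* Main.v *)
Require Import Defs.
From Stdlib Require Import Reals Lra Lia List Psatz.
From Coquelicot Require Import Coquelicot.
Open Scope R_scope.

Lemma fold_Rplus_init (l : list R) (a : R) :
  fold_right Rplus a l = fold_right Rplus 0 l + a.
Proof. induction l; simpl; [ring| rewrite IHl; ring]. Qed.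

Lemma sumR_0 f : sumR 0 f = 0.
Proof. reflexivity. Qed.

Lemma sumR_S n f : sumR (S n) f = sumR n f + f n.
Proof.
  unfold sumR. rewrite seq_S, map_app, fold_right_app. simpl.
  rewrite fold_Rplus_init. ring.
Qed.

Lemma V3_eq (a b : V3) : vx a = vx b -> vy a = vy b -> vz a = vz b -> a = b.
Proof. destruct a, b; simpl; intros; subst; reflexivity. Qed.

Lemma fold_vadd_init (l : list V3) (a : V3) :
  fold_right vadd a l = vadd (fold_right vadd vzero l) a.
Proof.
  induction l; simpl.
  - apply V3_eq; simpl; ring.
  - rewrite IHl. apply V3_eq; simpl; ring.
Qed.

Lemma sumV_S n f : sumV (S n) f = vadd (sumV n f) (f n).
Proof.
  unfold sumV. rewrite seq_S, map_app, fold_right_app. simpl.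
  rewrite fold_vadd_init. apply V3_eq; simpl; ring.
Qed.

Lemma sumR_ext n f g : (forall i, (i < n)%nat -> f i = g i) -> sumR n f = sumR n g.
Proof.
  induction n; intros H; [reflexivity|].
  rewrite !sumR_S, IHn, H; auto; lia.
Qed.

Lemma sumR_plus n f g : sumR n (fun i => f i + g i) = sumR n f + sumR n g.
Proof. induction n; [rewrite !sumR_0; ring|rewrite !sumR_S, IHn; ring]. Qed.

Lemma sumR_scal n c f : sumR n (fun i => c * f i) = c * sumR n f.
Proof. induction n; [rewrite !sumR_0; ring|rewrite !sumR_S, IHn; ring]. Qed.

Lemma sumR_nonneg n f : (forall i, (i < n)%nat -> 0 <= f i) -> 0 <= sumR n f.
Proof.
  induction n; intros H; [rewrite sumR_0; lra|].
  rewrite sumR_S. assert (0 <= f n) by (apply H; lia).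
  assert (0 <= sumR n f) by (apply IHn; intros; apply H; lia). lra.
Qed.

Lemma sumR_term_le n f k : (forall i, (i < n)%nat -> 0 <= f i) -> (k < n)%nat ->
  f k <= sumR n f.
Proof.
  induction n; intros H Hk; [lia|].
  rewrite sumR_S.
  assert (0 <= sumR n f) by (apply sumR_nonneg; intros; apply H; lia).
  destruct (Nat.eq_dec k n) as [->|Hne]; [lra|].
  assert (f k <= sumR n f) by (apply IHn; [intros; apply H; lia| lia]).
  assert (0 <= f n) by (apply H; lia). lra.
Qed.

Lemma sumR_zero_nonneg n f k : (forall i, (i < n)%nat -> 0 <= f i) -> sumR n f <= 0 ->
  (k < n)%nat -> f k = 0.
Proof.
  intros H Hs Hk. pose proof (sumR_term_le n f k H Hk). pose proof (H k Hk). lra.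
Qed.

Lemma sumR_abs_bound n f B : (forall i, (i < n)%nat -> Rabs (f i) <= B) ->
  Rabs (sumR n f) <= INR n * B.
Proof.
  induction n; intros H.
  - simpl. rewrite sumR_0, Rabs_R0. lra.
  - rewrite sumR_S, S_INR.
    assert (Rabs (sumR n f) <= INR n * B) by (apply IHn; intros; apply H; lia).
    assert (Rabs (f n) <= B) by (apply H; lia).
    pose proof (Rabs_triang (sumR n f) (f n)). lra.
Qed.

Lemma vdot_sumV L n f : vdot L (sumV n f) = sumR n (fun i => vdot L (f i)).
Proof.
  induction n; [unfold vdot, sumV, sumR; simpl; ring|].
  rewrite sumV_S, sumR_S, <- IHn. unfold vdot, vadd; simpl; ring.
Qed.

Lemma sumV_scal_const n f V : sumV n (fun i => vscal (f i) V) = vscal (sumR n f) V.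
Proof.
  induction n; [apply V3_eq; unfold sumV, sumR; simpl; ring|].
  rewrite sumV_S, sumR_S, IHn. apply V3_eq; simpl; ring.
Qed.

Lemma sumR_derive n (f : nat -> R -> R) (df : nat -> R) t :
  (forall i, (i < n)%nat -> is_derive (f i) t (df i)) ->
  is_derive (fun s => sumR n (fun i => f i s)) t (sumR n df).
Proof.
  induction n; intros H.
  - apply (is_derive_ext (fun _ => 0)); [intros; reflexivity|].
    apply (is_derive_const (V:=R_NormedModule)).
  - apply (is_derive_ext (fun s => sumR n (fun i => f i s) + f n s)).
    + intros; rewrite sumR_S; reflexivity.
    + rewrite sumR_S. apply (is_derive_plus (V:=R_NormedModule)).
      * apply IHn; intros; apply H; lia.
      * apply H; lia.
Qed.

Lemma lim_plus {T} {F : (T -> Prop) -> Prop} {FF : Filter F} (f g : T -> R) a b :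
  filterlim f F (locally a) -> filterlim g F (locally b) ->
  filterlim (fun x => f x + g x) F (locally (a + b)).
Proof.
  intros Hf Hg. eapply filterlim_comp_2; [exact Hf|exact Hg|].
  apply (filterlim_plus (V:=R_NormedModule)).
Qed.

Lemma lim_mult {T} {F : (T -> Prop) -> Prop} {FF : Filter F} (f g : T -> R) a b :
  filterlim f F (locally a) -> filterlim g F (locally b) ->
  filterlim (fun x => f x * g x) F (locally (a * b)).
Proof.
  intros Hf Hg. eapply filterlim_comp_2; [exact Hf|exact Hg|].
  apply (filterlim_mult (K:=R_AbsRing)).
Qed.

Lemma lim_const {T} {F : (T -> Prop) -> Prop} {FF : Filter F} (c : R) :
  filterlim (fun _ : T => c) F (locally c).
Proof. apply filterlim_const. Qed.

Lemma sumR_lim {T} {F : (T -> Prop) -> Prop} {FF : Filter F} n (f : nat -> T -> R) (a : nat -> R) :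
  (forall i, (i < n)%nat -> filterlim (f i) F (locally (a i))) ->
  filterlim (fun s => sumR n (fun i => f i s)) F (locally (sumR n a)).
Proof.
  induction n; intros H.
  - apply (filterlim_ext (fun _ => 0)); [intros; reflexivity|]. apply lim_const.
  - apply (filterlim_ext (fun s => sumR n (fun i => f i s) + f n s)).
    + intros; rewrite sumR_S; reflexivity.
    + rewrite sumR_S. apply lim_plus.
      * apply IHn; intros; apply H; lia.
      * apply H; lia.
Qed.

Lemma sumV_ext n f g : (forall i, (i < n)%nat -> f i = g i) -> sumV n f = sumV n g.
Proof.
  induction n; intros H; [reflexivity|].
  rewrite !sumV_S, IHn, H; auto; lia.
Qed.

Lemma vdot_self_nonneg a : 0 <= vdot a a.
Proof. unfold vdot. nra. Qed.

Lemma vdot_self_zero a : vdot a a = 0 -> a = vzero.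
Proof.
  unfold vdot; intros H. destruct a as [x y z]; simpl in *.
  assert (x = 0) by nra. assert (y = 0) by nra. assert (z = 0) by nra. subst. reflexivity.
Qed.

Lemma vdot_self_pos a : a <> vzero -> 0 < vdot a a.
Proof.
  intros H. destruct (Rle_lt_dec (vdot a a) 0) as [h|h]; auto.
  exfalso; apply H, vdot_self_zero. pose proof (vdot_self_nonneg a). lra.
Qed.

Definition S0 N (m : nat -> R) := sumR N (fun i => m i * (INR i + 1)^2).

Lemma S0_pos N m : (1 <= N)%nat -> (forall i, (i < N)%nat -> 0 < m i) -> 0 < S0 N m.
Proof.
  intros HN Hm. unfold S0.
  assert (0 < m 0%nat * (INR 0 + 1)^2) by (simpl; specialize (Hm 0%nat ltac:(lia)); nra).
  pose proof (sumR_term_le N (fun i => m i * (INR i + 1)^2) 0%nat).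
  assert (forall i, (i < N)%nat -> 0 <= m i * (INR i + 1)^2).
  { intros i Hi. specialize (Hm i Hi). pose proof (pos_INR i). nra. }
  specialize (H0 H1 ltac:(lia)). lra.
Qed.

Section Constr.
Variables (N : nat) (m : nat -> R) (u w : V3) (a b : R).
Definition crr : config := fun i => vscal (a * (INR i + 1)) u.
Definition cvv : config := fun i => vscal (b * (INR i + 1)) w.

Lemma constr_omega : a <> 0 -> u <> vzero -> in_Omega N crr cvv.
Proof.
  intros Ha Hu i j _ _ Hij Heq. apply Hij.
  assert (vdot u (crr i) = vdot u (crr j)) by (rewrite Heq; reflexivity).
  unfold crr, vdot, vscal in H; simpl in H.
  pose proof (vdot_self_pos u Hu). unfold vdot in H0.
  assert (a * (INR i + 1) = a * (INR j + 1)).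
  { apply (Rmult_eq_reg_r (vx u * vx u + vy u * vy u + vz u * vz u)); [|lra]. nra. }
  apply INR_eq. apply Rmult_eq_reg_l in H1; auto. lra.
Qed.

Lemma constr_angmom : angmom N m crr cvv = vscal (a * b * S0 N m) (vcross u w).
Proof.
  unfold angmom.
  rewrite (sumV_ext N _ (fun i => vscal (a * b * (m i * (INR i + 1)^2)) (vcross u w))).
  - rewrite sumV_scal_const, sumR_scal. reflexivity.
  - intros i _. apply V3_eq; unfold crr, cvv; simpl; ring.
Qed.

Lemma constr_kinetic : kinetic N m cvv = / 2 * (b^2 * S0 N m * vdot w w).
Proof.
  unfold kinetic, S0. f_equal.
  transitivity (sumR N (fun i => (b^2 * vdot w w) * (m i * (INR i + 1)^2))).
  - apply sumR_ext. intros i _. unfold cvv, vdot; simpl; ring.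
  - rewrite sumR_scal; ring.
Qed.

Lemma constr_gmom : gmom N m crr = a^2 * S0 N m * vdot u u.
Proof.
  unfold gmom, S0.
  transitivity (sumR N (fun i => (a^2 * vdot u u) * (m i * (INR i + 1)^2))).
  - apply sumR_ext. intros i _. unfold crr, vdot; simpl; ring.
  - rewrite sumR_scal; ring.
Qed.
End Constr.

Definition Sset N m L T := (fun x => exists r v : config,
              in_Omega N r v /\ angmom N m r v = L /\ kinetic N m v = T /\
              x = gmom N m r).

Lemma key_identity N m (R0 V0 : config) mu :
  let L := angmom N m R0 V0 in
  sumR N (fun i => m i * vdot (vsub (V0 i) (vscal mu (vcross L (R0 i))))
                               (vsub (V0 i) (vscal mu (vcross L (R0 i))))
                   + mu^2 * (m i * (vdot L (R0 i))^2))
  = 2 * kinetic N m V0 - 2 * mu * vdot L L + mu^2 * vdot L L * gmom N m R0.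
Proof.
  intros L.
  rewrite (sumR_ext N _ (fun i => (m i * vdot (V0 i) (V0 i) +
        (-2 * mu) * vdot L (vscal (m i) (vcross (R0 i) (V0 i)))) +
        (mu^2 * vdot L L) * (m i * vdot (R0 i) (R0 i)))).
  - rewrite !sumR_plus, !sumR_scal, <- vdot_sumV. unfold kinetic, gmom.
    fold (angmom N m R0 V0). fold L. field.
  - intros i _. unfold vdot, vsub, vscal, vcross; simpl. ring.
Qed.

Lemma gmom_pos N m R0 : (2 <= N)%nat -> (forall i, (i < N)%nat -> 0 < m i) ->
  in_R3 N R0 -> 0 < gmom N m R0.
Proof.
  intros HN Hm HR.
  assert (Hnn : forall i, (i < N)%nat -> 0 <= m i * vdot (R0 i) (R0 i)).
  { intros i Hi. pose proof (Hm i Hi). pose proof (vdot_self_nonneg (R0 i)). nra. }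
  assert (exists k, (k < N)%nat /\ 0 < vdot (R0 k) (R0 k)) as [k [Hk Hz]].
  { destruct (Req_dec (vdot (R0 0%nat) (R0 0%nat)) 0) as [h|h].
    - exists 1%nat. split; [lia|]. apply vdot_self_pos. intros h1.
      apply (HR 0%nat 1%nat); try lia. rewrite h1. apply vdot_self_zero, h.
    - exists 0%nat. split; [lia|]. pose proof (vdot_self_nonneg (R0 0%nat)). lra. }
  pose proof (sumR_term_le N _ k Hnn Hk). pose proof (Hm k Hk). unfold gmom. nra.
Qed.

Lemma kinetic_nonneg N m V0 : (forall i, (i < N)%nat -> 0 < m i) -> 0 <= kinetic N m V0.
Proof.
  intros Hm. unfold kinetic. apply Rmult_le_pos; [lra|]. apply sumR_nonneg.
  intros i Hi. pose proof (Hm i Hi). pose proof (vdot_self_nonneg (V0 i)). nra.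
Qed.

Lemma perp_vec (L : V3) : exists u, vdot u L = 0 /\ u <> vzero.
Proof.
  destruct (Req_dec (vy L) 0) as [h1|h1]; [destruct (Req_dec (vz L) 0) as [h2|h2]|].
  - exists (mkV3 0 1 0). split; [unfold vdot; simpl; rewrite h1; ring|].
    intros h; injection h; lra.
  - exists (mkV3 0 (vz L) (- vy L)). split; [unfold vdot; simpl; ring|].
    intros h; injection h; lra.
  - exists (mkV3 0 (vz L) (- vy L)). split; [unfold vdot; simpl; ring|].
    intros h; injection h; lra.
Qed.

Lemma plane_t0 N m R0 V0 : (2 <= N)%nat -> (forall i, (i < N)%nat -> 0 < m i) ->
  in_Omega N R0 V0 ->
  (forall x, Sset N m (angmom N m R0 V0) (kinetic N m V0) x -> gmom N m R0 <= x) ->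
  angmom N m R0 V0 <> vzero /\
  forall i, (i < N)%nat -> vdot (angmom N m R0 V0) (R0 i) = 0 /\
                           vdot (angmom N m R0 V0) (V0 i) = 0.
Proof.
  intros HN Hm HO Hmin.
  set (L := angmom N m R0 V0) in *. set (T := kinetic N m V0) in *.
  set (g0 := gmom N m R0) in *.
  assert (Hg : 0 < g0) by (apply gmom_pos; auto).
  assert (HT : 0 <= T) by (apply kinetic_nonneg; auto).
  assert (HS : 0 < S0 N m) by (apply S0_pos; auto; lia).
  set (mu := / g0).
  pose proof (key_identity N m R0 V0 mu) as Key. cbv zeta in Key. fold L T g0 in Key.
  set (F := fun i => m i * vdot (vsub (V0 i) (vscal mu (vcross L (R0 i))))
                               (vsub (V0 i) (vscal mu (vcross L (R0 i))))
                   + mu^2 * (m i * (vdot L (R0 i))^2)).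
  assert (HF : forall i, (i < N)%nat -> 0 <= F i).
  { intros i Hi. unfold F. pose proof (Hm i Hi).
    pose proof (vdot_self_nonneg (vsub (V0 i) (vscal mu (vcross L (R0 i))))).
    assert (0 <= mu^2 * (m i * (vdot L (R0 i))^2)).
    { apply Rmult_le_pos; [apply pow2_ge_0|]. apply Rmult_le_pos; [lra|apply pow2_ge_0]. }
    nra. }
  assert (Hsum : 0 <= sumR N F) by (apply sumR_nonneg; auto).
  fold F in Key.
  assert (HLL : 0 <= vdot L L) by apply vdot_self_nonneg.
  assert (E1 : 2 * T - 2 * mu * vdot L L + mu ^ 2 * vdot L L * g0 = 2 * T - vdot L L / g0).
  { unfold mu. field. lra. }
  rewrite E1 in Key.
  assert (HLnz : L <> vzero).
  { intros HL0.
    set (a := sqrt (g0 / (2 * S0 N m))). set (b := sqrt (2 * T / S0 N m)).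
    set (e1 := mkV3 1 0 0).
    assert (Ha : a * a = g0 / (2 * S0 N m)) by (apply sqrt_sqrt; apply Rlt_le, Rdiv_lt_0_compat; lra).
    assert (Hb : b * b = 2 * T / S0 N m) by (apply sqrt_sqrt; unfold Rdiv; apply Rmult_le_pos; [lra|apply Rlt_le, Rinv_0_lt_compat; lra]).
    assert (Hapos : 0 < a) by (apply sqrt_lt_R0, Rdiv_lt_0_compat; lra).
    assert (Sset N m L T (gmom N m (crr e1 a))).
    { exists (crr e1 a), (cvv e1 b). split; [|split; [|split]].
      - apply constr_omega; [lra|]. intros h; injection h; lra.
      - rewrite constr_angmom, HL0. apply V3_eq; simpl; ring.
      - rewrite constr_kinetic.
        replace (b^2) with (b*b) by ring. rewrite Hb. unfold vdot, e1; simpl. field. lra.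
      - reflexivity. }
    apply Hmin in H. rewrite constr_gmom in H.
    replace (a^2) with (a*a) in H by ring. rewrite Ha in H. unfold vdot, e1 in H; simpl in H.
    replace (g0 / (2 * S0 N m) * S0 N m * (1 * 1 + 0 * 0 + 0 * 0)) with (g0/2) in H by (field; lra).
    lra. }
  assert (HLp : 0 < vdot L L) by (apply vdot_self_pos; auto).
  assert (HTp : 0 < T).
  { assert (0 < vdot L L / g0) by (apply Rdiv_lt_0_compat; lra). lra. }
  assert (Hbound : 2 * T * g0 <= vdot L L).
  { destruct (perp_vec L) as [u [Hu1 Hu2]].
    pose proof (vdot_self_pos u Hu2) as Huu.
    set (w := vcross L u).
    set (b := sqrt (2 * T / (S0 N m * vdot L L * vdot u u))).
    assert (Hb : b * b = 2 * T / (S0 N m * vdot L L * vdot u u)).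
    { apply sqrt_sqrt. apply Rlt_le, Rdiv_lt_0_compat; [lra|].
      apply Rmult_lt_0_compat; [apply Rmult_lt_0_compat|]; lra. }
    assert (Hbpos : 0 < b).
    { apply sqrt_lt_R0, Rdiv_lt_0_compat; [lra|].
      apply Rmult_lt_0_compat; [apply Rmult_lt_0_compat|]; lra. }
    set (a := / (b * S0 N m * vdot u u)).
    assert (Hww : vdot w w = vdot L L * vdot u u).
    { unfold w. unfold vdot in *; simpl. 
      replace (vx u * vx L + vy u * vy L + vz u * vz L) with 0 in Hu1 |- * by lra.
      assert (Hz : vx u * vx L = - (vy u * vy L + vz u * vz L)) by lra.
      nra. }
    assert (Hcr : vcross u w = vscal (vdot u u) L).
    { unfold w. apply V3_eq; simpl.
      - transitivity (vdot u u * vx L - vx u * vdot u L); [unfold vdot; ring| rewrite Hu1; ring].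
      - transitivity (vdot u u * vy L - vy u * vdot u L); [unfold vdot; ring| rewrite Hu1; ring].
      - transitivity (vdot u u * vz L - vz u * vdot u L); [unfold vdot; ring| rewrite Hu1; ring]. }
    assert (Sset N m L T (gmom N m (crr u a))).
    { exists (crr u a), (cvv w b). split; [|split; [|split]].
      - apply constr_omega; auto. unfold a. apply Rinv_neq_0_compat.
        apply Rgt_not_eq. apply Rmult_lt_0_compat; [apply Rmult_lt_0_compat|]; lra.
      - rewrite constr_angmom, Hcr. apply V3_eq; simpl; unfold a; field; repeat split; lra.
      - rewrite constr_kinetic, Hww. replace (b^2) with (b*b) by ring. rewrite Hb. field.
        repeat split; lra.
      - reflexivity. }
    apply Hmin in H. rewrite constr_gmom in H.
    assert (E : a ^ 2 * S0 N m * vdot u u = vdot L L / (2 * T)).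
    { unfold a. replace (vdot L L) with (2 * T / (S0 N m * vdot u u * (b * b))) at 1.
      - field. repeat split; lra.
      - rewrite Hb. field. repeat split; lra. }
    rewrite E in H. apply Rle_div_r in H; [|lra]. lra. }
  assert (Hle : sumR N F <= 0).
  { rewrite Key. assert (vdot L L / g0 >= 2 * T); [|lra].
    apply Rle_ge. apply Rmult_le_reg_r with g0; [lra|]. replace (vdot L L / g0 * g0) with (vdot L L) by (field; lra). lra. }
  split; auto.
  intros i Hi. pose proof (sumR_zero_nonneg N F i HF Hle Hi) as Hz.
  unfold F in Hz. pose proof (Hm i Hi).
  pose proof (vdot_self_nonneg (vsub (V0 i) (vscal mu (vcross L (R0 i))))).
  assert (Hmu : 0 < mu) by (unfold mu; apply Rinv_0_lt_compat; lra).
  assert (0 <= mu^2 * (m i * (vdot L (R0 i))^2)).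
  { apply Rmult_le_pos; [apply pow2_ge_0|]. apply Rmult_le_pos; [lra|apply pow2_ge_0]. }
  assert (Hd : vdot (vsub (V0 i) (vscal mu (vcross L (R0 i))))
                    (vsub (V0 i) (vscal mu (vcross L (R0 i)))) = 0) by nra.
  assert (Hr : mu^2 * (m i * (vdot L (R0 i))^2) = 0) by nra.
  apply vdot_self_zero in Hd.
  split.
  - assert (mu^2 * m i > 0) by (apply Rmult_lt_0_compat; [apply pow_lt|]; lra).
    assert ((vdot L (R0 i))^2 = 0) by nra. nra.
  - assert (vdot L (V0 i) = vdot L (vsub (V0 i) (vscal mu (vcross L (R0 i))))).
    { unfold vdot, vsub, vscal, vcross; simpl; ring. }
    rewrite H2, Hd. unfold vdot; simpl; ring.
Qed.

Lemma decr_on_pos (h dh : R -> R) s t :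
  (forall x, 0 < x -> is_derive h x (dh x)) -> (forall x, 0 < x -> dh x <= 0) ->
  0 < s -> s <= t -> h t <= h s.
Proof.
  intros Hd Hn Hs Hst.
  assert (E1 : Rmin s t = s) by (apply Rmin_left; lra).
  assert (E2 : Rmax s t = t) by (apply Rmax_right; lra).
  destruct (MVT_gen h s t dh) as [c [Hc Heq]].
  - intros x Hx. apply Hd. rewrite E1, E2 in Hx. lra.
  - intros x Hx. apply continuity_pt_filterlim. apply (ex_derive_continuous (K:=R_AbsRing) (V:=R_NormedModule)).
    exists (dh x). apply Hd. rewrite E1, E2 in Hx. lra.
  - rewrite E1, E2 in Hc.
    assert (dh c <= 0) by (apply Hn; lra). nra.
Qed.

Lemma derive_prod_exp (E : R -> R) dE c x :
  is_derive E x dE ->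
  is_derive (fun x => E x * exp (c * x)) x ((dE + c * E x) * exp (c * x)).
Proof.
  intros H.
  assert (H1 : is_derive (fun x => exp (c * x)) x (c * exp (c * x))).
  { auto_derive; [exact I| ring]. }
  pose proof (is_derive_mult _ _ x _ _ H H1 ltac:(intros; apply Rmult_comm)) as H2.
  assert (Heq : (dE + c * E x) * exp (c * x) =
     plus (mult dE (exp (c * x))) (mult (E x) (c * exp (c * x)))).
  { unfold plus, mult; simpl. ring. }
  rewrite Heq. exact H2.
Qed.

Section Gron.
Variables (E dE : R -> R) (K : R).
Hypothesis HK : 0 <= K.
Hypothesis Hd : forall t, 0 < t -> is_derive E t (dE t).
Hypothesis Hb : forall t, 0 < t -> Rabs (dE t) <= K * E t.

Lemma gron_fwd s t : 0 < s -> s <= t -> E t * exp (- K * t) <= E s * exp (- K * s).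
Proof.
  apply (decr_on_pos (fun x => E x * exp (- K * x)) (fun x => (dE x + - K * E x) * exp (- K * x))).
  - intros x Hx. apply derive_prod_exp, Hd, Hx.
  - intros x Hx. pose proof (Hb x Hx) as H. pose proof (exp_pos (- K * x)).
    apply Rabs_le_between in H. nra.
Qed.

Lemma gron_bwd s t : 0 < s -> s <= t -> E s * exp (K * s) <= E t * exp (K * t).
Proof.
  intros Hs Hst.
  assert (- (E t * exp (K * t)) <= - (E s * exp (K * s))); [|lra].
  apply (decr_on_pos (fun x => - (E x * exp (K * x))) (fun x => - ((dE x + K * E x) * exp (K * x)))); auto.
  - intros x Hx. apply (is_derive_opp (fun x => E x * exp (K * x))). apply derive_prod_exp, Hd, Hx.
  - intros x Hx. pose proof (Hb x Hx) as H. pose proof (exp_pos (K * x)).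
    apply Rabs_le_between in H. nra.
Qed.

Hypothesis Hnn : forall t, 0 < t -> 0 <= E t.

Lemma gron_A t0 : 0 < t0 -> E t0 = 0 -> forall t, 0 < t -> E t = 0.
Proof.
  intros Ht0 HE t Ht. pose proof (Hnn t Ht).
  destruct (Rle_dec t0 t).
  - pose proof (gron_fwd t0 t Ht0 r). rewrite HE in H0. pose proof (exp_pos (- K * t)). nra.
  - pose proof (gron_bwd t t0 Ht ltac:(lra)). rewrite HE in H0. pose proof (exp_pos (K * t)). nra.
Qed.

Lemma gron_B : filterlim E (at_right 0) (locally 0) -> forall t, 0 < t -> E t = 0.
Proof.
  intros Hl t Ht. pose proof (Hnn t Ht). destruct (Req_dec (E t) 0) as [h|h]; auto.
  exfalso.
  assert (Heps : 0 < E t * exp (- K * t)) by (pose proof (exp_pos (- K * t)); apply Rmult_lt_0_compat; lra).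
  apply filterlim_locally with (eps := mkposreal _ Heps) in Hl.
  assert (Hr : at_right 0 (fun s => s < t)).
  { exists (mkposreal _ Ht). intros y Hy _. unfold ball in Hy; simpl in Hy.
    unfold AbsRing_ball, abs, minus, plus, opp in Hy; simpl in Hy.
    apply Rabs_lt_between in Hy. lra. }
  assert (Hp : at_right 0 (fun s => 0 < s)).
  { exists (mkposreal _ Rlt_0_1). intros y _ Hy. exact Hy. }
  pose proof (filter_and _ _ Hl (filter_and _ _ Hr Hp)) as Hall.
  destruct (Hierarchy.filter_ex _ Hall) as [s [Hs1 [Hs2 Hs3]]].
  unfold ball in Hs1; simpl in Hs1.
  unfold AbsRing_ball, abs, minus, plus, opp in Hs1; simpl in Hs1.
  apply Rabs_lt_between in Hs1.
  pose proof (gron_fwd s t Hs3 ltac:(lra)).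
  assert (exp (- K * s) <= 1).
  { rewrite <- exp_0. assert (- K * s <= 0) by nra.
    destruct (Rlt_or_le (- K * s) 0) as [h1|h1].
    - apply Rlt_le, exp_increasing, h1.
    - replace (- K * s) with 0 by lra. lra. }
  pose proof (Hnn s Hs3). pose proof (exp_pos (- K * s)).
  assert (E s * exp (- K * s) <= E s) by nra. lra.
Qed.
End Gron.

Lemma deriv_vdot (L : V3) f t d : is_derive_V3 f t d ->
  is_derive (fun s => vdot L (f s)) t (vdot L d).
Proof.
  intros [H1 [H2 H3]]. unfold vdot.
  apply (is_derive_scal _ _ (vx L)) in H1.
  apply (is_derive_scal _ _ (vy L)) in H2.
  apply (is_derive_scal _ _ (vz L)) in H3.
  exact (is_derive_plus _ _ _ _ _ (is_derive_plus _ _ _ _ _ H1 H2) H3).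
Qed.

Lemma is_derive_eq' (f : R -> R) t a b : is_derive f t a -> a = b -> is_derive f t b.
Proof. intros H ->; exact H. Qed.

Lemma deriv_sq (f : R -> R) t df : is_derive f t df ->
  is_derive (fun s => f s * f s) t (2 * f t * df).
Proof.
  intros H. pose proof (is_derive_mult _ _ t _ _ H H ltac:(intros; apply Rmult_comm)) as H2.
  eapply is_derive_eq'; [exact H2|]. unfold plus, mult; simpl. ring.
Qed.

Lemma lim_vdot (L : V3) f : right_cont_V3 f 0 ->
  filterlim (fun s => vdot L (f s)) (at_right 0) (locally (vdot L (f 0))).
Proof.
  intros [H1 [H2 H3]]. unfold vdot.
  repeat apply lim_plus; apply lim_mult; auto; apply lim_const.
Qed.

Lemma abs_bound_w (w a b E : R) : w * w <= E -> a * a <= E -> b * b <= E ->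
  Rabs (w * (a - b)) <= 2 * E.
Proof.
  intros H1 H2 H3.
  pose proof (Rle_0_sqr (w + a)). pose proof (Rle_0_sqr (w - b)).
  pose proof (Rle_0_sqr (w - a)). pose proof (Rle_0_sqr (w + b)). unfold Rsqr in *.
  apply Rabs_le. split; nra.
Qed.

Section ODE.
Variables (N : nat) (m : nat -> R) (gamma : R) (r v : R -> config) (L : V3) (C1 C2 : R).
Hypothesis Hm : forall i, (i < N)%nat -> 0 < m i.
Hypothesis Hg : 0 < gamma.
Hypothesis Hsol : is_solution N gamma m r v.
Hypothesis HC1 : 0 < C1.
Hypothesis Hst : forall t, 0 <= t -> forall i j, (i < N)%nat -> (j < N)%nat -> i <> j ->
      C1 <= vnorm (vsub (r t j) (r t i)) <= C2.

Definition z i t := vdot L (r t i).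
Definition w i t := vdot L (v t i).
Definition En t := sumR N (fun i => z i t * z i t + w i t * w i t).
Definition LF i t := vdot L (force N gamma m (r t) i).
Definition dEn t := sumR N (fun i => 2 * z i t * w i t + 2 * w i t * (/ m i * LF i t)).
Definition Msum := sumR N m.
Definition Kc := INR N * (1 + 4 * INR N * gamma * Msum / C1 ^ 3).

Lemma En_nonneg t : 0 <= En t.
Proof. apply sumR_nonneg. intros i _. nra. Qed.

Lemma En_term i t : (i < N)%nat -> z i t * z i t + w i t * w i t <= En t.
Proof. intros Hi. apply (sumR_term_le N (fun i => z i t * z i t + w i t * w i t)); auto. intros; nra. Qed.

Lemma Msum_nonneg : 0 <= Msum.
Proof. apply sumR_nonneg. intros i Hi. pose proof (Hm i Hi). lra. Qed.

Lemma Kc_nonneg : 0 <= Kc.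
Proof.
  unfold Kc. pose proof (pos_INR N). pose proof Msum_nonneg.
  assert (0 < C1 ^ 3) by (apply pow_lt; lra).
  assert (0 <= 4 * INR N * gamma * Msum / C1 ^ 3).
  { unfold Rdiv. apply Rmult_le_pos; [|apply Rlt_le, Rinv_0_lt_compat; lra].
    apply Rmult_le_pos; [|lra]. apply Rmult_le_pos; [|lra]. lra. }
  nra.
Qed.

Lemma En_deriv t : 0 < t -> is_derive En t (dEn t).
Proof.
  intros Ht. unfold En, dEn.
  apply (sumR_derive N (fun i s => z i s * z i s + w i s * w i s)).
  intros i Hi. destruct Hsol as [_ [Hd _]]. destruct (Hd i Hi t Ht) as [Hr Hv].
  apply (is_derive_plus (V:=R_NormedModule)).
  - apply deriv_sq. unfold z. apply deriv_vdot. exact Hr.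
  - apply deriv_sq. unfold w.
    apply (is_derive_ext (fun s => / m i * vdot L (vscal (m i) (v s i)))).
    + intros s. pose proof (Hm i Hi). unfold vdot, vscal; simpl. field. lra.
    + apply is_derive_scal. apply deriv_vdot. exact Hv.
Qed.

Lemma LF_expand i t : LF i t = sumR N (fun j => if Nat.eqb j i then 0 else
     gamma * m i * m j / (vnorm (vsub (r t j) (r t i))) ^ 3 * (z j t - z i t)).
Proof.
  unfold LF, force. rewrite vdot_sumV. apply sumR_ext. intros j _.
  destruct (Nat.eqb j i).
  - unfold vdot; simpl; ring.
  - unfold z, vdot, vscal, vsub; simpl; ring.
Qed.

Lemma wLF_bound i t : 0 <= t -> (i < N)%nat ->
  Rabs (w i t * LF i t) <= INR N * (gamma * m i * Msum / C1 ^ 3 * (2 * En t)).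
Proof.
  intros Ht Hi. rewrite LF_expand, <- sumR_scal. apply sumR_abs_bound.
  intros j Hj.
  assert (HC3 : 0 < C1 ^ 3) by (apply pow_lt; lra).
  pose proof (En_nonneg t). pose proof (Hm i Hi). pose proof Msum_nonneg.
  assert (Hb0 : 0 <= gamma * m i * Msum / C1 ^ 3 * (2 * En t)).
  { apply Rmult_le_pos; [|lra]. unfold Rdiv. apply Rmult_le_pos; [|apply Rlt_le, Rinv_0_lt_compat; lra].
    apply Rmult_le_pos; [|lra]. apply Rmult_le_pos; lra. }
  destruct (Nat.eqb j i) eqn:Eji.
  - rewrite Rmult_0_r, Rabs_R0. exact Hb0.
  - apply Nat.eqb_neq in Eji.
    set (d := vnorm (vsub (r t j) (r t i))).
    assert (Hd : C1 <= d) by (apply (Hst t Ht i j Hi Hj); auto).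
    assert (Hd3 : C1 ^ 3 <= d ^ 3) by (apply pow_incr; lra).
    assert (Hmj : m j <= Msum) by (apply (sumR_term_le N m j); auto; intros; apply Rlt_le, Hm; auto).
    pose proof (Hm j Hj).
    set (c := gamma * m i * m j / d ^ 3).
    assert (Hc0 : 0 <= c).
    { unfold c, Rdiv. apply Rmult_le_pos; [|apply Rlt_le, Rinv_0_lt_compat; lra].
      apply Rmult_le_pos; [|lra]. apply Rmult_le_pos; lra. }
    assert (Hc1 : c <= gamma * m i * Msum / C1 ^ 3).
    { unfold c, Rdiv. apply Rmult_le_compat.
      - apply Rmult_le_pos; [apply Rmult_le_pos|]; lra.
      - apply Rlt_le, Rinv_0_lt_compat; lra.
      - apply Rmult_le_compat_l; [apply Rmult_le_pos|]; lra.
      - apply Rinv_le_contravar; lra. }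
    replace (w i t * (c * (z j t - z i t))) with (c * (w i t * (z j t - z i t))) by ring.
    rewrite Rabs_mult, (Rabs_right c) by lra.
    assert (Rabs (w i t * (z j t - z i t)) <= 2 * En t).
    { apply abs_bound_w.
      - pose proof (En_term i t Hi). nra.
      - pose proof (En_term j t Hj). nra.
      - pose proof (En_term i t Hi). nra. }
    pose proof (Rabs_pos (w i t * (z j t - z i t))).
    apply Rmult_le_compat; auto.
Qed.

Lemma En_bound t : 0 < t -> Rabs (dEn t) <= Kc * En t.
Proof.
  intros Ht. unfold dEn.
  replace (Kc * En t) with (INR N * ((1 + 4 * INR N * gamma * Msum / C1 ^ 3) * En t))
    by (unfold Kc; ring).
  apply sumR_abs_bound. intros i Hi.
  pose proof (Hm i Hi). pose proof (En_term i t Hi). pose proof (En_nonneg t).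
  assert (HC3 : 0 < C1 ^ 3) by (apply pow_lt; lra).
  pose proof (wLF_bound i t ltac:(lra) Hi) as HW.
  eapply Rle_trans; [apply Rabs_triang|].
  assert (Rabs (2 * z i t * w i t) <= En t).
  { pose proof (Rle_0_sqr (z i t + w i t)). pose proof (Rle_0_sqr (z i t - w i t)).
    unfold Rsqr in *. apply Rabs_le. split; nra. }
  assert (Rabs (2 * w i t * (/ m i * LF i t)) <= 4 * INR N * gamma * Msum / C1 ^ 3 * En t).
  { replace (2 * w i t * (/ m i * LF i t)) with ((2 / m i) * (w i t * LF i t)) by (field; lra).
    rewrite Rabs_mult, (Rabs_right (2 / m i)).
    2:{ apply Rle_ge, Rlt_le, Rdiv_lt_0_compat; lra. }
    replace (4 * INR N * gamma * Msum / C1 ^ 3 * En t) with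
      ((2 / m i) * (INR N * (gamma * m i * Msum / C1 ^ 3 * (2 * En t)))) by (field; lra).
    apply Rmult_le_compat_l; auto. apply Rlt_le, Rdiv_lt_0_compat; lra. }
  lra.
Qed.

End ODE.

Theorem theorem11p1 (N : nat) (m : nat -> R) (gamma : R)
    (r v : R -> config) (t0 : R) :
  (2 <= N)%nat ->
  (forall i, (i < N)%nat -> 0 < m i) ->
  0 < gamma ->
  is_solution N gamma m r v ->
  stationary N r ->
  0 <= t0 ->
  Wfun N m (angmom N m (r t0) (v t0)) (kinetic N m (v t0)) = Finite (gmom N m (r t0)) ->
  flat N r.
Proof.
  intros HN Hm Hg Hsol Hst Ht0 HW.
  destruct Hst as [C1 [C2 [HC1 [HC12 Hst]]]].
  set (L := angmom N m (r t0) (v t0)) in *.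
  assert (Hmin : forall x, Sset N m L (kinetic N m (v t0)) x -> gmom N m (r t0) <= x).
  { intros x Hx. pose proof (Glb_Rbar_correct (Sset N m L (kinetic N m (v t0)))) as [Hlb _].
    unfold Wfun in HW. change (Glb_Rbar (Sset N m L (kinetic N m (v t0))) = Finite (gmom N m (r t0))) in HW.
    rewrite HW in Hlb. specialize (Hlb x Hx). exact Hlb. }
  destruct (plane_t0 N m (r t0) (v t0) HN Hm (proj1 Hsol t0 Ht0) Hmin) as [HL0 Hperp].
  fold L in HL0, Hperp.
  set (E := En N r v L).
  assert (HE0 : forall t, 0 < t -> E t = 0).
  { assert (Hd : forall t, 0 < t -> is_derive E t (dEn N m gamma r v L t)).
    { intros t Ht. apply En_deriv; auto. }
    assert (Hb : forall t, 0 < t -> Rabs (dEn N m gamma r v L t) <= Kc N m gamma C1 * E t).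
    { intros t Ht. apply (En_bound N m gamma r v L C1 C2); auto. }
    assert (Hnn : forall t, 0 < t -> 0 <= E t) by (intros; apply En_nonneg).
    assert (HK : 0 <= Kc N m gamma C1) by (apply Kc_nonneg; auto).
    assert (HEt0 : E t0 = 0).
    { unfold E, En. rewrite (sumR_ext N _ (fun _ => 0)).
      - clear. induction N; [reflexivity|]. rewrite sumR_S, IHN. ring.
      - intros i Hi. destruct (Hperp i Hi) as [h1 h2]. unfold z, w. rewrite h1, h2. ring. }
    destruct (Rle_lt_or_eq_dec 0 t0 Ht0) as [Hpos|Heq].
    - eapply (gron_A E); eauto.
    - eapply (gron_B E); eauto.
      assert (Hlim : filterlim E (at_right 0) (locally (E 0))); 
        [| replace (E 0) with 0 in Hlim by (rewrite <- Heq in HEt0; symmetry; exact HEt0); exact Hlim].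
      unfold E, En. apply sumR_lim. intros i Hi.
      destruct Hsol as [_ [_ Hc]]. destruct (Hc i Hi) as [Hr Hv].
      apply lim_plus; apply lim_mult; unfold z, w.
      + exact (lim_vdot L (fun s => r s i) Hr).
      + exact (lim_vdot L (fun s => r s i) Hr).
      + exact (lim_vdot L (fun s => v s i) Hv).
      + exact (lim_vdot L (fun s => v s i) Hv). }
  assert (Hz : forall t i, 0 < t -> (i < N)%nat -> vdot L (r t i) = 0).
  { intros t i Ht Hi. pose proof (HE0 t Ht). pose proof (En_term N r v L i t Hi).
    fold E in H0. unfold z, w in H0.
    pose proof (Rle_0_sqr (vdot L (r t i))). pose proof (Rle_0_sqr (vdot L (v t i))).
    unfold Rsqr in *. nra. }
  exists L, 0. split; auto.
  intros t Ht i Hi.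
  destruct (Rle_lt_or_eq_dec 0 t Ht) as [Hpos|Heq]; [apply Hz; auto|].
  subst t.
  destruct (Rle_lt_or_eq_dec 0 t0 Ht0) as [Hpos|Heq]; [|subst t0; apply Hperp; auto].
  destruct Hsol as [_ [_ Hc]]. destruct (Hc i Hi) as [Hr _].
  pose proof (lim_vdot L _ Hr) as Hl.
  assert (Hl0 : filterlim (fun s => vdot L (r s i)) (at_right 0) (locally 0)).
  { apply (filterlim_ext_loc (fun _ => 0)).
    - exists (mkposreal _ Rlt_0_1). intros y _ Hy. simpl. symmetry. apply Hz; auto.
    - apply lim_const. }
  exact (filterlim_locally_unique _ _ _ Hl Hl0).
Qed.
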